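(* The set of points of exact period $3$ under $G$ lies on the curve $1+v+uv=0$ (i.e. $v=-1/(1+u)$), and the Zariski closure in $\mathbb{C}^2$ of this set is this curve (the equation of period three orbits on the $(u,v)$-plane is $v=-1/(1+u)$).
   Context: Let \[ G(u,v)=\left(\frac{-u+v+uv}{u},\ \frac{u^{2}-u+v-u^{2}v-uv+uv^{2}+v^{2}}{u}\right), \] defined for $(u,v)\in\mathbb{C}^2$ with $u\neq 0$. A point $(u,v)$ has exact period $n$ under $G$ if the iterates $G^k(u,v)$, $0\le k\le n-1$, all have nonzero first coordinate, $G^n(u,v)=(u,v)$, and $G^k(u,v)\neq(u,v)$ for $0<k<n$. *)

(* Defs.v *)
From HB Require Import structures.
From mathcomp Require Import all_boot all_algebra.
From mathcomp Require Import complex.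
From mathcomp Require Import Rstruct.
From mathcomp Require Import mpoly.
From Stdlib Require Import Reals.
Set Implicit Arguments. Unset Strict Implicit. Unset Printing Implicit Defensive.
Import GRing.Theory.
Local Open Scope ring_scope.

Definition Cx : Type := complex R.

(* The map G (total function; only used where the first coordinate is nonzero). *)
Definition G (p : Cx * Cx) : Cx * Cx :=
  let u := p.1 in let v := p.2 in
  ((- u + v + u * v) / u,
   (u ^+ 2 - u + v - u ^+ 2 * v - u * v + u * v ^+ 2 + v ^+ 2) / u).

Definition exact_period (n : nat) (p : Cx * Cx) : Prop :=
  [/\ (forall k : nat, leq k.+1 n -> (iter k G p).1 != 0),
      iter n G p = p &
      (forall k : nat, leq 1 k -> leq k.+1 n -> iter k G p != p)].

Definition pt (p : Cx * Cx) : 'I_2 -> Cx :=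
  fun i => if val i == 0%N then p.1 else p.2.

Definition zariski_closure (S : Cx * Cx -> Prop) (x : Cx * Cx) : Prop :=
  forall f : {mpoly Cx[2]}, (forall p, S p -> f.@[pt p] = 0) -> f.@[pt x] = 0.

(* Main.v *)
Require Import Defs.
From HB Require Import structures.
From mathcomp Require Import all_boot all_algebra.
From mathcomp Require Import complex.
From mathcomp Require Import Rstruct.
From mathcomp Require Import mpoly.
From Stdlib Require Import Reals.
From mathcomp Require Import ring.
Import GRing.Theory Num.Theory.
Local Open Scope ring_scope.

Lemma Gstep (u v : Cx) : u != 0 ->
  (G (u, v)).1 * u = - u + v + u * v /\ (G (u, v)).2 = (v - u + 1) * (G (u, v)).1.
Proof.
move=> hu; rewrite /G /=; split.
  by field.
by field.
Qed.

Lemma part1 (p : Cx * Cx) : exact_period 3 p -> 1 + p.2 + p.1 * p.2 = 0.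
Proof.
case: p => u0 v0 /=.
case=> Hnz Hper Hne.
have h0 : u0 != 0 by exact: (Hnz O).
case E1: (G (u0, v0)) => [u1 v1].
case E2: (G (u1, v1)) => [u2 v2].
case E3: (G (u2, v2)) => [u3 v3].
have h1 : u1 != 0.
  by have := Hnz (S O) isT; change (iter 1 G _) with (G (u0, v0)); rewrite E1.
have h2 : u2 != 0.
  by have := Hnz (S (S O)) isT; change (iter 2 G _) with (G (G (u0, v0))); rewrite E1 E2.
have Hne1 : (u1, v1) != (u0, v0).
  by have := Hne (S O) isT isT; change (iter 1 G _) with (G (u0, v0)); rewrite E1.
have [Hu3 Hv3] : u3 = u0 /\ v3 = v0.
  move: Hper; change (iter 3 G _) with (G (G (G (u0, v0)))).
  by rewrite E1 E2 E3 => -[-> ->].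
have [A1 B1] := Gstep u0 v0 h0; rewrite E1 /= in A1 B1.
have [t0 Ht] : exists t0, v0 = t0 + u0 by exists (v0 - u0); ring.
rewrite Ht in A1 B1 Hne1 Hv3 E1 *.
have [A2 B2] := Gstep u1 v1 h1; rewrite E2 /= in A2 B2.
have [A3 B3] := Gstep u2 v2 h2; rewrite E3 /= Hu3 Hv3 in A3 B3.
rewrite B1 in A2 B2; rewrite B2 in A3 B3.
have A : u1 * u0 = t0 * (1 + u0) + u0 ^+ 2 by rewrite A1; ring.
have E2' : u2 = t0 * (1 + u1) + u1.
  apply: (mulIf h1); rewrite A2; ring.
have E3' : u0 = t0 * u1 * (1 + u2) + u2.
  apply: (mulIf h2); rewrite A3; ring.
have E4' : t0 * (u0 * u1 * u2 - 1) = 0.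
  move/eqP: B3; rewrite -subr_eq0 => /eqP H.
  by rewrite -oppr0 -H; ring.
have ht0 : t0 != 0.
  apply/negP => /eqP ht0; move: Hne1; rewrite ht0 in A B1 E1 *.
  have hu : u1 = u0 by apply: (mulIf h0); rewrite A; ring.
  by rewrite hu B1 hu; apply/negP; rewrite negbK; apply/eqP; congr (_, _); ring.
have E4 : u0 * u1 * u2 = 1.
  move/eqP: E4'; rewrite mulf_eq0 (negbTE ht0) /= subr_eq0 => /eqP //.
have A0 : u1 * u0 - (t0 * (1 + u0) + u0 ^+ 2) = 0 by rewrite A subrr.
have E20 : u2 - (t0 * (1 + u1) + u1) = 0 by rewrite {1}E2' subrr.
have E30 : u0 - (t0 * u1 * (1 + u2) + u2) = 0 by rewrite {1}E3' subrr.
have E40 : u0 * u1 * u2 - 1 = 0 by rewrite E4 subrr.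
have key : - (t0 * (2 * (1 + u0 + u0 * u1))) =
  (u1 * u0 - (t0 * (1 + u0) + u0 ^+ 2))
  + u0 * ((u2 - (t0 * (1 + u1) + u1)) + (u0 - (t0 * u1 * (1 + u2) + u2)))
  + t0 * (u0 * u1 * u2 - 1) by ring.
rewrite A0 E20 E30 E40 !(mulr0, addr0) in key.
have K : 1 + u0 + u0 * u1 = 0.
  move/eqP: key; rewrite oppr_eq0 mulf_eq0 (negbTE ht0) /= mulf_eq0.
  by rewrite pnatr_eq0 /= => /eqP.
have -> : 1 + (t0 + u0) + u0 * (t0 + u0) =
  (1 + u0 + u0 * u1) - (u1 * u0 - (t0 * (1 + u0) + u0 ^+ 2)) by ring.
by rewrite K A0 subrr.
Qed.
Definition P0 (s : Cx) : Cx * Cx := (s - 1, - s^-1).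
Definition P1 (s : Cx) : Cx * Cx := (- s / (s - 1), s - 1).
Definition P2 (s : Cx) : Cx * Cx := (- s^-1, - s / (s - 1)).

Lemma Gc0 s : s != 0 -> s - 1 != 0 -> G (P0 s) = P1 s.
Proof. move=> h0 h1; rewrite /G /P0 /P1 /=; congr (_, _); field; rewrite ?h0 ?h1 //. Qed.
Lemma Gc1 s : s != 0 -> s - 1 != 0 -> G (P1 s) = P2 s.
Proof. move=> h0 h1; rewrite /G /P1 /P2 /=; congr (_, _); field; rewrite ?h0 ?h1 //. Qed.
Lemma Gc2 s : s != 0 -> s - 1 != 0 -> G (P2 s) = P0 s.
Proof. move=> h0 h1; rewrite /G /P0 /P2 /=; congr (_, _); field; rewrite ?h0 ?h1 //. Qed.

Lemma per3_gen (s : Cx) : s != 0 -> s - 1 != 0 -> s ^+ 2 - s + 1 != 0 ->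
  exact_period 3 (P0 s).
Proof.
move=> h0 h1 hq.
have I1 : iter (S O) G (P0 s) = P1 s := Gc0 s h0 h1.
have I2 : iter (S (S O)) G (P0 s) = P2 s by rewrite iterS I1; exact: Gc1.
have I3 : iter (S (S (S O))) G (P0 s) = P0 s by rewrite iterS I2; exact: Gc2.
split.
- case=> [|[|[|k]]] // _.
  + by rewrite I1 /P1 /= mulf_neq0 ?oppr_eq0 ?invr_eq0.
  + by rewrite I2 /P2 /= oppr_eq0 invr_neq0.
- exact: I3.
- case=> [|[|[|k]]] // _ _.
  + rewrite I1 /P1 /P0; apply/eqP => -[e1 _]; move: hq.
    have -> : s ^+ 2 - s + 1 = ((s - 1) - (- s / (s - 1))) * (s - 1) by field.
    by rewrite e1 subrr mul0r eqxx.
  + rewrite I2 /P2 /P0; apply/eqP => -[e1 _]; move: hq.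
    have -> : s ^+ 2 - s + 1 = ((s - 1) - (- s^-1)) * s by field.
    by rewrite e1 subrr mul0r eqxx.
Qed.

Lemma per3 (n : nat) : exact_period 3 (P0 (n + 2)%:R).
Proof.
apply: per3_gen.
- by rewrite pnatr_eq0 addn2.
- have -> : (n + 2)%:R - 1 = (n + 1)%:R :> Cx by ring.
  by rewrite pnatr_eq0 addn1.
- have -> : (n + 2)%:R ^+ 2 - (n + 2)%:R + 1 = (n * n + 3 * n + 3)%:R :> Cx by ring.
  by rewrite pnatr_eq0 addn3.
Qed.

Definition i1 : 'I_2 := lift ord0 ord0.

Definition Qp (f : {mpoly Cx[2]}) : {poly Cx} :=
  \sum_(m <- msupp f) ((f@_m * (-1) ^+ (m i1)) *:
     (('X - 1) ^+ (m ord0) * 'X^(msize f - m i1))).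

Lemma Qeval (f : {mpoly Cx[2]}) (s : Cx) : s != 0 ->
  (Qp f).[s] = s ^+ msize f * f.@[pt (P0 s)].
Proof.
move=> hs; rewrite mevalE /Qp horner_sum mulr_sumr; apply: eq_big_seq => m hm.
have hk : leq (m i1) (msize f).
  apply: leq_trans (ltnW (msize_mdeg_lt hm)).
  by rewrite mdegE !big_ord_recl big_ord0 addn0 leq_addl.
have Hp : \prod_(i < 2) pt (P0 s) i ^+ m i = (s - 1) ^+ (m ord0) * (- s^-1) ^+ (m i1).
  by rewrite !big_ord_recl big_ord0 mulr1.
rewrite Hp hornerZ hornerM horner_exp hornerXn !hornerE.
have -> : s ^+ msize f = s ^+ (msize f - m i1) * s ^+ m i1 by rewrite -exprD subnK.
rewrite [(- s^-1) ^+ _]exprNn exprVn.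
have hX : s ^+ m i1 != 0 by rewrite expf_neq0.
move: hX; move: (s ^+ m i1) => X hX.
move: (s ^+ (msize f - m i1)) => Y.
move: ((s - 1) ^+ m ord0) => Z.
move: ((-1) ^+ m i1) => W.
have E : f@_m * W * Z * Y = Y * X * f@_m * Z * (W / X) by field.
exact: E.
Qed.

Definition fc : {mpoly Cx[2]} := 1 + 'X_i1 + 'X_ord0 * 'X_i1.

Lemma fc_eval p : fc.@[pt p] = 1 + p.2 + p.1 * p.2.
Proof. by rewrite /fc !(mevalD, mevalM, mevalXU, meval1). Qed.

Theorem mainTheorem5 :
  (forall p : Cx * Cx, exact_period 3 p -> 1 + p.2 + p.1 * p.2 = 0) /\
  (forall x : Cx * Cx,
     zariski_closure (exact_period 3) x <-> 1 + x.2 + x.1 * x.2 = 0).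
Proof.
split; first exact: part1.
move=> x; split.
  move=> H; rewrite -fc_eval; apply: H => p hp; rewrite fc_eval; exact: part1.
case: x => a b /= hx f Hf.
have hs : 1 + a != 0.
  apply/eqP => e.
  have : 1 + b + a * b = 1 + b * (1 + a) by ring.
  by rewrite e mulr0 addr0 hx => /esym/eqP; rewrite oner_eq0.
have HQ : Qp f = 0.
  apply: (@roots_geq_poly_eq0 _ _ [seq (i + 2)%:R | i <- iota 0 (size (Qp f))]).
  - apply/allP => y /mapP [i _ ->].
    rewrite /root Qeval; last by rewrite pnatr_eq0 addn2.
    by rewrite (Hf _ (per3 i)) mulr0.
  - rewrite map_inj_uniq ?iota_uniq // => i j /eqP.
    by rewrite eqr_nat eqn_add2r => /eqP.
  - by rewrite size_map size_iota.
have := Qeval f (1 + a) hs; rewrite HQ horner0 => /esym/eqP.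
rewrite mulf_eq0 expf_eq0 (negbTE hs) andbF /= => /eqP.
have -> : P0 (1 + a) = (a, b).
  rewrite /P0; congr (_, _); first by ring.
  apply: (mulIf hs); rewrite mulNr mulVf //.
  apply/eqP; rewrite eq_sym -subr_eq0 -hx; apply/eqP; ring.
by [].
Qed.
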